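(* Let $(\mathbb{K},|\cdot|)$ be an algebraically closed normed field, $f\in\mathbb{K}[z]$ a polynomial of degree $n\ge2$, $\xi\in\mathbb{K}^n$ a root-vector of $f$, $N\ge1$ and $1\le p\le\infty$. Suppose $x^{(0)}\in\mathbb{K}^n$ has pairwise distinct components and \[ \Psi(E(x^{(0)}))\le 2 . \] Then $f$ has only simple zeros, and the $N$th Weierstrass-type iteration $x^{(k+1)}=T^{(N)}(x^{(k)})$ is well-defined and converges to $\xi$ with error estimates \[ \|x^{(k+1)}-\xi\|\preceq\theta\,\lambda^{(N+1)^k}\|x^{(k)}-\xi\|,\qquad \|x^{(k)}-\xi\|\preceq\theta^k\lambda^{((N+1)^k-1)/N}\|x^{(0)}-\xi\| \] for all $k\ge0$, where $\lambda=\phi_N(E(x^{(0)}))$ and $\theta=\psi_N(E(x^{(0)}))$. Moreover, if $\Psi(E(x^{(0)}))<2$, then the iteration converges to $\xi$ with order of convergence $N+1$.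
   Context: $a_0$ is the leading coefficient of $f$. For $1\le p\le\infty$, $\|x\|_p=(\sum_i|x_i|^p)^{1/p}$ (max-norm if $p=\infty$). For $x\in\mathbb{K}^n$, $\|x\|=(|x_1|,\dots,|x_n|)\in\mathbb{R}^n$ and $\preceq$ is the coordinatewise order on $\mathbb{R}^n$. $d(x)=(d_1(x),\dots,d_n(x))$, $d_i(x)=\min_{j\ne i}|x_i-x_j|$; for $x\in\mathbb{K}^n$, $y\in\mathbb{R}^n$ with nonzero components, $x/y=(|x_1|/y_1,\dots,|x_n|/y_n)$. A root-vector of $f$ is $\xi\in\mathbb{K}^n$ with $f(z)=a_0\prod_{i}(z-\xi_i)$ for all $z$. $E(x)=\|(x-\xi)/d(x)\|_p$. Weierstrass-type maps: $T^{(0)}(x)=x$ on $D_0=\mathbb{K}^n$; $D_{N+1}=\{x\in D_N: x_i\ne T^{(N)}_j(x)\ \forall i\ne j\}$, and for $x\in D_{N+1}$, $T^{(N+1)}_i(x)=x_i-\dfrac{f(x_i)}{a_0\prod_{j\ne i}(x_i-T^{(N)}_j(x))}$. The iteration is well-defined if $x^{(k)}\in D_N$ for all $k$. Real functions: $\omega(t)=\left(1+\frac{t}{(n-1)^{1/p}}\right)^{n-1}$ (with $(n-1)^{1/p}=1$ if $p=\infty$), $\Psi(t)=(1+2t)\omega(t)$ for $t\ge0$; $R$ is the unique positive solution of $\Psi(t)=2$. On $[0,R]$: $\phi_0\equiv1$, and recursively $\omega_N(t)=\left(1+\frac{t\phi_N(t)}{(n-1)^{1/p}}\right)^{n-1}$,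 $\phi_{N+1}(t)=\dfrac{\omega_N(t)-1}{1-2t\omega_N(t)}$ (well-defined, nondecreasing, with values in $[0,1]$); for $N\ge1$, $\psi_N(t)=1-2t\,\omega_{N-1}(t)$. *)

(* Defs.v *)
From HB Require Import structures.
From mathcomp Require Import all_boot all_order all_algebra.
From mathcomp Require Import all_classical all_reals.
From mathcomp Require Import ereal exp.
Set Implicit Arguments. Unset Strict Implicit. Unset Printing Implicit Defensive.
Import Order.TTheory GRing.Theory Num.Theory.
Local Open Scope ring_scope.

Definition absval (K : fieldType) (R : realType) (abs : K -> R) : Prop :=
  [/\ (forall x, 0 <= abs x),
      (forall x, abs x = 0 <-> x = 0),
      (forall x y, abs (x * y) = abs x * abs y) &
      (forall x y, abs (x + y) <= abs x + abs y)].

Definition lpnorm (R : realType) (p : \bar R) (n : nat) (v : 'I_n -> R) : R :=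
  match p with
  | +oo%E => \big[Num.max/0]_(i < n) `|v i|
  | EFin q => (\sum_(i < n) `|v i| `^ q) `^ q^-1
  | -oo%E => 0
  end.

Definition proot (R : realType) (p : \bar R) (n : nat) : R :=
  match p with
  | EFin q => (n.-1)%:R `^ q^-1
  | _ => 1
  end.

Definition omega (R : realType) (p : \bar R) (n : nat) (t : R) : R :=
  (1 + t / proot p n) ^+ n.-1.

Definition Psi (R : realType) (p : \bar R) (n : nat) (t : R) : R :=
  (1 + 2 * t) * omega p n t.

Fixpoint phi (R : realType) (p : \bar R) (n : nat) (N : nat) (t : R) : R :=
  match N with
  | 0 => 1
  | N'.+1 =>
      let w := (1 + t * phi p n N' t / proot p n) ^+ n.-1 in
      (w - 1) / (1 - 2 * t * w)
  end.

Definition omegaN (R : realType) (p : \bar R) (n : nat) (N : nat) (t : R) : R :=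
  (1 + t * phi p n N t / proot p n) ^+ n.-1.

Definition psi (R : realType) (p : \bar R) (n : nat) (N : nat) (t : R) : R :=
  1 - 2 * t * omegaN p n N.-1 t.

Definition dist (K : fieldType) (R : realType) (abs : K -> R) (n : nat)
    (x : 'I_n -> K) (i : 'I_n) : R :=
  fine (\big[Order.min/+oo%E]_(j < n | j != i) (abs (x i - x j))%:E).

Definition Err (K : fieldType) (R : realType) (abs : K -> R) (p : \bar R)
    (n : nat) (xi x : 'I_n -> K) : R :=
  lpnorm p (fun i => abs (x i - xi i) / dist abs x i).

Definition root_vector (K : fieldType) (n : nat) (f : {poly K}) (xi : 'I_n -> K) :=
  forall z, f.[z] = lead_coef f * \prod_(i < n) (z - xi i).

(* Weierstrass-type maps T^(N) (with the total division of MathComp; they are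
   used only on the domains D_N below, where no denominator vanishes). *)
Fixpoint WT (K : fieldType) (n : nat) (f : {poly K}) (N : nat) (x : 'I_n -> K)
    : 'I_n -> K :=
  match N with
  | 0 => x
  | N'.+1 => fun i =>
      x i - f.[x i] / (lead_coef f * \prod_(j < n | j != i) (x i - WT f N' x j))
  end.

Fixpoint inD (K : fieldType) (n : nat) (f : {poly K}) (N : nat) (x : 'I_n -> K)
    : Prop :=
  match N with
  | 0 => True
  | N'.+1 => inD f N' x /\ (forall i j : 'I_n, i != j -> x i != WT f N' x j)
  end.

Definition converges (K : fieldType) (R : realType) (abs : K -> R)
    (u : nat -> K) (l : K) : Prop :=
  forall eps : R, 0 < eps -> exists k0, forall k, (k0 <= k)%N -> abs (u k - l) < eps.

Definition maxnorm (K : fieldType) (R : realType) (abs : K -> R) (n : nat)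
    (v : 'I_n -> K) : R := \big[Num.max/0]_(i < n) abs (v i).

Definition conv_order (K : fieldType) (R : realType) (abs : K -> R) (n : nat)
    (x : nat -> 'I_n -> K) (xi : 'I_n -> K) (r : nat) : Prop :=
  (forall i, converges abs (fun k => x k i) (xi i)) /\
  exists C : R, 0 <= C /\ forall k,
    maxnorm abs (fun i => x k.+1 i - xi i)
      <= C * maxnorm abs (fun i => x k i - xi i) ^+ r.

(* Main.v *)
Require Import Defs.
From HB Require Import structures.
From mathcomp Require Import all_boot all_order all_algebra.
From mathcomp Require Import all_classical all_reals.
From mathcomp Require Import ereal exp convex hoelder sequences normedtype topology.
From mathcomp Require Import ring lra zify.
Import Order.TTheory GRing.Theory Num.Theory.
Set Implicit Arguments. Unset Strict Implicit.
Local Open Scope ring_scope.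

Lemma proot_gt0 (R : realType) (p : \bar R) n : (2 <= n)%N -> 0 < proot p n.
Proof.
case: p => [q| |] //= Hn; apply: powR_gt0; rewrite ltr0n.
by case: n Hn => [|[|n]].
Qed.

Lemma gexp (R : realFieldType) m (a b c : R) : 0 <= c <= 1 -> 0 <= b ->
  0 <= a <= c * b -> (1 + a) ^+ m - 1 <= c * ((1 + b) ^+ m - 1).
Proof.
move=> /andP[c0 c1] b0 /andP[a0 acb].
have cb0 : 0 <= c * b by rewrite mulr_ge0.
apply: (@le_trans _ _ ((1 + c * b) ^+ m - 1)).
  by rewrite lerD2r lerXn2r // ?nnegrE ?addr_ge0 // lerD2l.
rewrite !subrX1 [1 + c * b]addrC addrK [1 + b]addrC addrK mulrA.
apply: ler_wpM2l => //; apply: ler_sum => i _.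
rewrite lerXn2r // ?nnegrE ?addr_ge0 // lerD2r.
by rewrite -[X in _ <= X]mul1r ler_wpM2r.
Qed.

Lemma expr_ge1D (R : realFieldType) m (a : R) : (1 <= m)%N -> 0 <= a -> 1 + a <= (1 + a) ^+ m.
Proof.
case: m => // m _ a0; rewrite exprS -[X in X <= _]mulr1 ler_wpM2l ?addr_ge0 //.
by rewrite exprn_ege1 // lerDl.
Qed.

Lemma omegaN_bounds (R : realType) (p : \bar R) n M t : (2 <= n)%N -> 0 <= t ->
  0 <= phi p n M t <= 1 -> 1 <= omegaN p n M t <= omega p n t.
Proof.
move=> n2 t0 /andP[f0 f1]; have pr0 := proot_gt0 p n2.
rewrite /omegaN /omega; apply/andP; split.
  by rewrite exprn_ege1 // lerDl divr_ge0 ?mulr_ge0 // ltW.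
rewrite lerXn2r ?nnegrE ?addr_ge0 ?divr_ge0 ?mulr_ge0 ?(ltW pr0) // lerD2l.
by rewrite ler_pM2r ?invr_gt0 // -[X in _ <= X]mulr1 ler_wpM2l.
Qed.

Lemma omega_ge (R : realType) (p : \bar R) n t : (2 <= n)%N -> 0 <= t ->
  1 + t / proot p n <= omega p n t.
Proof.
move=> n2 t0; have pr0 := proot_gt0 p n2.
apply: expr_ge1D; last by rewrite divr_ge0 // ltW.
by case: (n) n2 => [|[|k]].
Qed.

Lemma key_pos (R : realType) (p : \bar R) n t : (2 <= n)%N -> 0 <= t ->
  Psi p n t <= 2 -> 0 < 1 - 2 * t * omega p n t.
Proof.
move=> n2 t0 HP; have pr0 := proot_gt0 p n2.
have hw := omega_ge p n2 t0.
move: HP; rewrite /Psi; move: (omega p n t) hw => w hw HP.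
have [->|tp] := eqVneq t 0; first by rewrite mulr0 mul0r subr0.
have tp' : 0 < t by rewrite lt_neqAle eq_sym tp t0.
have a0 : 0 < t / proot p n by rewrite divr_gt0.
have -> : 2 * t * w = 2 * (t * w) by rewrite mulrA.
have HP' : w + 2 * (t * w) <= 2 by move: HP; rewrite mulrDl mul1r mulrA.
lra.
Qed.

Lemma phi_props (R : realType) (p : \bar R) n t : (2 <= n)%N -> 0 <= t ->
  Psi p n t <= 2 -> forall M, 0 <= phi p n M t <= 1 /\ 0 < 1 - 2 * t * omegaN p n M t.
Proof.
move=> n2 t0 HP.
have kp := key_pos n2 t0 HP.
have step : forall M, 0 <= phi p n M t <= 1 -> 0 < 1 - 2 * t * omegaN p n M t.
  move=> M /(omegaN_bounds n2 t0) /andP[_ h].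
  apply: (lt_le_trans kp); rewrite lerD2l lerN2 ler_wpM2l // mulr_ge0 //.
elim=> [|M [IH1 IH2]].
  have h0 : 0 <= phi p n 0 t <= 1 by apply/andP; split => //=; rewrite ler01.
  by split => //; apply: step.
have H1 : 0 <= phi p n M.+1 t <= 1.
  have -> : phi p n M.+1 t = (omegaN p n M t - 1) / (1 - 2 * t * omegaN p n M t) by [].
  have /andP[w1 w2] := omegaN_bounds n2 t0 IH1.
  apply/andP; split; first by apply: divr_ge0; [rewrite subr_ge0 | exact: ltW].
  rewrite ler_pdivrMr // mul1r.
  have : (1 + 2 * t) * (omega p n t - omegaN p n M t) >= 0.
    by rewrite mulr_ge0 ?subr_ge0 // addr_ge0 ?mulr_ge0.
  move: HP; rewrite /Psi; nra.
by split => //; apply: step.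
Qed.

Lemma omega_mono (R : realType) (p : \bar R) n s t : (2 <= n)%N -> 0 <= s <= t ->
  omega p n s <= omega p n t.
Proof.
move=> n2 /andP[s0 st]; have pr0 := proot_gt0 p n2.
have t0 : 0 <= t := le_trans s0 st.
rewrite /omega lerXn2r ?nnegrE ?addr_ge0 ?divr_ge0 ?(ltW pr0) // lerD2l.
by rewrite ler_pM2r ?invr_gt0.
Qed.

Lemma Psi_mono (R : realType) (p : \bar R) n s t : (2 <= n)%N -> 0 <= s <= t ->
  Psi p n s <= Psi p n t.
Proof.
move=> n2 /andP[s0 st]; have := omega_mono p n2 (s:=s) (t:=t).
rewrite s0 st => /(_ isT) h; rewrite /Psi.
have w0 : 0 <= omega p n s by apply: le_trans (omega_ge p n2 s0); rewrite addr_ge0 // divr_ge0 // ltW // proot_gt0.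
apply: ler_pM => //; first by rewrite addr_ge0 // mulr_ge0.
by rewrite lerD2l ler_pM2l.
Qed.

Lemma gauge (R : realType) (p : \bar R) n t c s : (2 <= n)%N -> 0 <= t ->
  Psi p n t <= 2 -> 0 <= c <= 1 -> 0 <= s <= c * t -> forall M,
  phi p n M s <= c ^+ M * phi p n M t /\
  omegaN p n M s - 1 <= c ^+ M.+1 * (omegaN p n M t - 1).
Proof.
move=> n2 t0 HP /andP[c0 c1] /andP[s0 sct] M.
have pr0 := proot_gt0 p n2.
have st : s <= t by apply: (le_trans sct); rewrite -[X in _ <= X]mul1r ler_wpM2r.
have HPs : Psi p n s <= 2 by apply: le_trans HP; apply: Psi_mono => //; rewrite s0.
have Pt := phi_props n2 t0 HP; have Ps := phi_props n2 s0 HPs.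
have cM k : 0 <= c ^+ k <= 1 by rewrite exprn_ge0 // exprn_ile1.
have Hw : forall M, phi p n M s <= c ^+ M * phi p n M t ->
    omegaN p n M s - 1 <= c ^+ M.+1 * (omegaN p n M t - 1).
  move=> K hK; rewrite /omegaN; apply: gexp => //.
    by rewrite divr_ge0 ?mulr_ge0 ?(ltW pr0) //; case/andP: (Pt K).1.
  apply/andP; split.
    by rewrite divr_ge0 ?mulr_ge0 ?(ltW pr0) //; case/andP: (Ps K).1.
  rewrite mulrA ler_pM2r ?invr_gt0 // exprS mulrACA.
  apply: ler_pM => //; first by case/andP: (Ps K).1.
elim: M => [|M [IH1 IH2]].
  by split; [rewrite expr0 mul1r | apply: Hw; rewrite expr0 mul1r].
have H1 : phi p n M.+1 s <= c ^+ M.+1 * phi p n M.+1 t.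
  have E x : phi p n M.+1 x = (omegaN p n M x - 1) / (1 - 2 * x * omegaN p n M x) by [].
  rewrite !E.
  have /andP[ws1 _] := omegaN_bounds n2 s0 (Ps M).1.
  have /andP[wt1 _] := omegaN_bounds n2 t0 (Pt M).1.
  have ds := (Ps M).2; have dt := (Pt M).2.
  have wst : omegaN p n M s <= omegaN p n M t.
    have := IH2; have /andP[_ h1] := cM M.+1.
    have : c ^+ M.+1 * (omegaN p n M t - 1) <= omegaN p n M t - 1.
      by rewrite -[X in _ <= X]mul1r ler_wpM2r // subr_ge0.
    lra.
  have dst : 1 - 2 * t * omegaN p n M t <= 1 - 2 * s * omegaN p n M s.
    rewrite lerD2l lerN2 -!mulrA ler_wpM2l // ler_pM //; lra.
  rewrite mulrA; apply: (@le_trans _ _ ((omegaN p n M s - 1) / (1 - 2 * t * omegaN p n M t))).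
    by rewrite ler_wpM2l ?subr_ge0 // lef_pV2 ?posrE.
  by rewrite ler_pM2r ?invr_gt0.
by split => //; apply: Hw.
Qed.
Lemma powR_conv (R : realType) (q l x y : R) : 1 <= q -> 0 <= l -> l <= 1 ->
  0 <= x -> 0 <= y ->
  (l * x + (1 - l) * y) `^ q <= l * x `^ q + (1 - l) * y `^ q.
Proof.
move=> q1 l0 l1 x0 y0.
have := @convex_powR R q q1 (Itv01 l0 l1) x y.
rewrite !inE /= !in_itv /= !andbT => /(_ x0 y0).
by rewrite !convRE /=.
Qed.

Lemma jensen (R : realType) (I : Type) (q : R) (r : seq I) (P : pred I) (F : I -> R) :
  1 <= q -> (forall i, 0 <= F i) -> (0 < count P r)%N ->
  ((\sum_(i <- r | P i) F i) / (count P r)%:R) `^ q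
    <= (\sum_(i <- r | P i) F i `^ q) / (count P r)%:R.
Proof.
move=> q1 F0; elim: r => [|x r IH] //=; rewrite !big_cons.
case Px: (P x) => /=; last by rewrite add0n.
move=> _.
have [k0|kp] := posnP (count P r).
  have hn : ~~ has P r by rewrite has_count k0.
  by rewrite big_hasC // big_hasC // k0 !addr0 divr1 divr1.
have IH' := IH kp.
set S := \sum_(i <- r | P i) F i in IH' *.
set T := \sum_(i <- r | P i) F i `^ q in IH' *.
set k := count P r in IH' kp *.
have S0 : 0 <= S by rewrite sumr_ge0.
have kR : 0 < k%:R :> R by rewrite ltr0n.
set l : R := 1 / (k.+1)%:R.
have l0 : 0 <= l by rewrite divr_ge0.
have l1 : l <= 1 by rewrite ler_pdivrMr ?ltr0n // mul1r ler1n.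
have E1 : (F x + S) / (1 + k)%:R = l * F x + (1 - l) * (S / k%:R).
  by rewrite /l add1n; field; rewrite (gt_eqF kR) gt_eqF // addr_gt0.
rewrite E1; apply: (le_trans (powR_conv q1 l0 l1 (F0 x) (divr_ge0 S0 (ltW kR)))).
have E2 : (F x `^ q + T) / (1 + k)%:R = l * F x `^ q + (1 - l) * (T / k%:R).
  by rewrite /l add1n; field; rewrite (gt_eqF kR) gt_eqF // addr_gt0.
by rewrite E2 lerD2l ler_wpM2l // subr_ge0.
Qed.

Lemma lp_ge0 (R : realType) (p : \bar R) n (v : 'I_n -> R) : 0 <= lpnorm p v.
Proof.
case: p => [q| |] //=; first exact: powR_ge0.
by elim/big_ind: _ => // a b ha hb; rewrite le_max ha.
Qed.

Lemma lp_comp (R : realType) (p : \bar R) n (v : 'I_n -> R) i :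
  (1 <= p)%E -> (forall j, 0 <= v j) -> v i <= lpnorm p v.
Proof.
case: p => [q| |] //= hq v0; last first.
  by rewrite -[v i]ger0_norm // (le_bigmax _ (fun j => `|v j|) i).
have q1 : 1 <= q by rewrite -lee_fin.
have q0 : 0 < q by apply: lt_le_trans q1.
have -> : v i = (v i `^ q) `^ q^-1.
  by rewrite -powRrM mulfV ?gt_eqF // powRr1.
apply: ge0_ler_powR; rewrite ?nnegrE ?powR_ge0 ?sumr_ge0 //.
  by rewrite invr_ge0 (ltW q0).
rewrite (bigD1 i) //= ger0_norm // lerDl sumr_ge0 // => j _; exact: powR_ge0.
Qed.

Lemma lp_mono (R : realType) (p : \bar R) n (v w : 'I_n -> R) :
  (1 <= p)%E -> (forall j, 0 <= v j <= w j) -> lpnorm p v <= lpnorm p w.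
Proof.
case: p => [q| |] //= hq vw; last first.
  apply: le_bigmax2 => j _; have /andP[h1 h2] := vw j.
  by rewrite !ger0_norm // (le_trans h1 h2).
have q1 : 1 <= q by rewrite -lee_fin.
have q0 : 0 < q by apply: lt_le_trans q1.
apply: ge0_ler_powR; rewrite ?nnegrE ?sumr_ge0 //;
  try by move=> j _; rewrite powR_ge0.
  by rewrite invr_ge0 (ltW q0).
apply: ler_sum => j _; have /andP[h1 h2] := vw j.
rewrite !ger0_norm ?(le_trans h1 h2) //.
by apply: ge0_ler_powR; rewrite ?nnegrE ?(le_trans h1 h2) // ltW.
Qed.

Lemma lp_scale (R : realType) (p : \bar R) n (c : R) (v : 'I_n -> R) :
  (1 <= p)%E -> 0 <= c -> (forall j, 0 <= v j) ->
  lpnorm p (fun j => c * v j) <= c * lpnorm p v.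
Proof.
move=> hp c0 v0; have hc := fun i => lp_comp i hp v0.
have := lp_ge0 p v => hl.
case: p hp hc hl => [q| |] //= hq hc hl; last first.
  apply: bigmax_le; first by rewrite mulr_ge0.
  move=> j _; rewrite normrM !ger0_norm //; apply: ler_wpM2l => //.
have q1 : 1 <= q by rewrite -lee_fin.
have q0 : 0 < q by apply: lt_le_trans q1.
rewrite (eq_bigr (fun j => c `^ q * `|v j| `^ q)); last first.
  by move=> j _; rewrite normrM ger0_norm // powRM.
rewrite -mulr_sumr powRM ?sumr_ge0 ?powR_ge0 //.
by rewrite -powRrM mulfV ?gt_eqF // powRr1.
Qed.

Lemma card_count n (i0 : 'I_n) : count (fun j => j != i0) (index_enum 'I_n) = n.-1.
Proof.
have := cardC1 i0; rewrite card_ord cardE /enum_mem size_filter => <-.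
by apply: eq_count => j.
Qed.

Lemma prod_bound (R : realType) (p : \bar R) n (v : 'I_n -> R) (i0 : 'I_n) :
  (2 <= n)%N -> (1 <= p)%E -> (forall j, 0 <= v j) ->
  \prod_(j | j != i0) (1 + v j) <= (1 + lpnorm p v / proot p n) ^+ n.-1.
Proof.
move=> n2 hp v0.
have hA : #|predC1 i0| = n.-1 by rewrite cardC1 card_ord.
have mR : 0 < n.-1%:R :> R by rewrite ltr0n; case: (n) n2 => [|[|]].
have := (@leif_AGM R _ (predC1 i0) (fun j => 1 + v j) (fun j _ => addr_ge0 ler01 (v0 j))).1.
rewrite hA => /le_trans; apply.
set S := \sum_(i in predC1 i0) v i.
have -> : (\sum_(i in predC1 i0) (1 + v i)) / n.-1%:R = 1 + S / n.-1%:R.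
  rewrite big_split /= sumr_const hA -/S mulrDl mulr_natl.
  by rewrite -mulr_natr mulVf ?gt_eqF.
have S0 : 0 <= S by rewrite sumr_ge0.
have pr0 := proot_gt0 p n2.
rewrite lerXn2r ?nnegrE ?addr_ge0 ?divr_ge0 ?lp_ge0 ?(ltW mR) ?(ltW pr0) // lerD2l.
have hc := fun i => lp_comp i hp v0.
have SA : S = \sum_(i | i != i0) v i by apply: eq_bigl => j; rewrite inE.
clear pr0; case: p hp hc => [q| |] //= hp hc; last first.
  rewrite divr1 ler_pdivrMr //.
  apply: (@le_trans _ _ (\sum_(i in predC1 i0) \big[Num.max/0]_(i < n) `|v i|)).
    by apply: ler_sum => j _; apply: hc.
  by rewrite sumr_const hA mulr_natr.
have q1 : 1 <= q by rewrite -lee_fin.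
have q0 : 0 < q by apply: lt_le_trans q1.
have J := @jensen R 'I_n q (index_enum 'I_n) (fun j => j != i0) v q1 v0.
rewrite card_count in J; have /J {}J : (0 < n.-1)%N by case: (n) n2 => [|[|]].
rewrite -SA in J.
set T := \sum_(i < n) `|v i| `^ q.
have T0 : 0 <= T by rewrite sumr_ge0 // => j _; rewrite powR_ge0.
have J2 : (S / n.-1%:R) `^ q <= T / n.-1%:R.
  apply: (le_trans J); rewrite ler_pM2r ?invr_gt0 //.
  apply: (@le_trans _ _ (\sum_(i | i != i0) `|v i| `^ q)).
    by apply: ler_sum => j _; rewrite ger0_norm.
  rewrite [X in _ <= X](bigID (fun j => j != i0)) /= lerDl.
  by apply: sumr_ge0 => j _; rewrite powR_ge0.
have -> : S / n.-1%:R = ((S / n.-1%:R) `^ q) `^ q^-1.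
  by rewrite -powRrM mulfV ?gt_eqF // powRr1 // divr_ge0 // ltW.
apply: (@le_trans _ _ ((T / n.-1%:R) `^ q^-1)).
  apply: ge0_ler_powR => //; rewrite ?nnegrE ?powR_ge0 ?divr_ge0 ?(ltW mR) //.
  by rewrite invr_ge0 ltW.
rewrite powRM ?invr_ge0 ?(ltW mR) //.
have E : (n.-1%:R^-1) `^ q^-1 = (n.-1%:R `^ q^-1)^-1 :> R.
  have h : (n.-1%:R * n.-1%:R^-1) `^ q^-1 = 1 :> R by rewrite mulfV ?gt_eqF // powR1.
  rewrite powRM ?invr_ge0 ?(ltW mR) // in h.
  apply: (mulfI (x := n.-1%:R `^ q^-1)); first by rewrite gt_eqF // powR_gt0.
  by rewrite h mulfV // gt_eqF // powR_gt0.
by rewrite E.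
Qed.


Lemma abs1 (K : fieldType) (R : realType) (abs : K -> R) : absval abs -> abs 1 = 1.
Proof.
case=> a0 aeq amul _.
have h : abs 1 = abs 1 * abs 1 by rewrite -amul mulr1.
have nz : abs 1 != 0 by apply/eqP => /aeq /eqP; rewrite oner_eq0.
by apply: (mulfI nz); rewrite mulr1 -h.
Qed.

Lemma absN (K : fieldType) (R : realType) (abs : K -> R) x : absval abs -> abs (- x) = abs x.
Proof.
move=> ha; have h1 := abs1 ha; case: ha => a0 aeq amul _.
have h : abs (-1) * abs (-1) = 1 by rewrite -amul mulrNN mulr1.
have hN : abs (-1) = 1.
  have := a0 (-1); move: h; set a := abs (-1) => h ha0; nra.
by rewrite -mulN1r amul hN mul1r.
Qed.

Lemma abs_subC (K : fieldType) (R : realType) (abs : K -> R) x y : absval abs ->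
  abs (x - y) = abs (y - x).
Proof. by move=> ha; rewrite -absN // opprB. Qed.

Lemma abs_subge (K : fieldType) (R : realType) (abs : K -> R) x y : absval abs ->
  abs x - abs y <= abs (x - y).
Proof.
move=> ha; case: ha => a0 aeq amul atri.
have := atri (x - y) y; rewrite subrK; lra.
Qed.

Lemma abs_inv (K : fieldType) (R : realType) (abs : K -> R) x : absval abs ->
  abs (x^-1) = (abs x)^-1.
Proof.
move=> ha; have h1 := abs1 ha; case: ha => a0 aeq amul _.
have [->|x0] := eqVneq x 0; first by rewrite invr0 (proj2 (aeq 0) erefl) invr0.
have ax : abs x != 0 by apply/eqP => /aeq /eqP; rewrite (negbTE x0).
apply: (mulfI ax); rewrite -amul mulfV // mulfV //.
Qed.

Lemma abs_div (K : fieldType) (R : realType) (abs : K -> R) x y : absval abs ->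
  abs (x / y) = abs x / abs y.
Proof. by move=> ha; have := ha; case=> _ _ amul _; rewrite amul abs_inv. Qed.

Lemma abs_prod (K : fieldType) (R : realType) (abs : K -> R) (I : Type) (r : seq I) (P : pred I) F :
  absval abs -> abs (\prod_(i <- r | P i) F i) = \prod_(i <- r | P i) abs (F i).
Proof.
move=> ha; have h1 := abs1 ha; case: ha => a0 aeq amul _.
by apply: (big_morph abs amul h1).
Qed.

Lemma abs_prod1 (K : fieldType) (R : realType) (abs : K -> R) (I : Type) (r : seq I) (P : pred I) w :
  absval abs ->
  abs (\prod_(i <- r | P i) (1 + w i) - 1) <= \prod_(i <- r | P i) (1 + abs (w i)) - 1.
Proof.
move=> ha; have h1 := abs1 ha; have := ha; case=> a0 aeq amul atri.
apply: (big_rec2 (fun y1 y2 => abs (y1 - 1) <= y2 - 1)).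
  by rewrite subrr (proj2 (aeq 0) erefl) subrr.
move=> i y1 y2 _ h.
have hy : abs y1 <= y2.
  have := atri (y1 - 1) 1; rewrite subrK h1; lra.
have -> : (1 + w i) * y1 - 1 = (y1 - 1) + w i * y1 by ring.
apply: (le_trans (atri _ _)); rewrite amul.
have : abs (w i) * abs y1 <= abs (w i) * y2 by rewrite ler_wpM2l.
nra.
Qed.

Lemma exists_other n (i : 'I_n) : (2 <= n)%N -> exists j : 'I_n, j != i.
Proof.
move=> n2.
have h0 : (0 < n)%N by case: (n) n2.
have h1 : (1 < n)%N by [].
case: (eqVneq i (Ordinal h0)) => [->|ne]; last by exists (Ordinal h0); rewrite eq_sym.
by exists (Ordinal h1).
Qed.

Lemma distP (K : fieldType) (R : realType) (abs : K -> R) n (x : 'I_n -> K) (i : 'I_n) :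
  (2 <= n)%N ->
  (exists2 j0, j0 != i & dist abs x i = abs (x i - x j0)) /\
  (forall j, j != i -> dist abs x i <= abs (x i - x j)).
Proof.
move=> n2.
set F := fun j => (abs (x i - x j))%:E.
have Hle : forall j, j != i -> (\big[Order.min/+oo%E]_(j < n | j != i) F j <= F j)%O.
  by move=> j hj; apply: bigmin_le_cond.
have Hex : \big[Order.min/+oo%E]_(j < n | j != i) F j = +oo%E \/
    exists2 j0, j0 != i & \big[Order.min/+oo%E]_(j < n | j != i) F j = F j0.
  apply: (big_rec (fun y => y = +oo%E \/ exists2 j0, j0 != i & y = F j0)); first by left.
  move=> j y hj [->|[j0 hj0 ->]].
    by right; exists j; rewrite // minEle leey.
  right; rewrite minEle; case: ifP => _; [exists j | exists j0] => //.
have [j1 hj1] := exists_other i n2.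
case: Hex => [hinf|[j0 hj0 heq]].
  by have := Hle j1 hj1; rewrite hinf /F leye_eq.
split.
  by exists j0 => //; rewrite /dist -/F heq.
move=> j hj; have := Hle j hj; rewrite heq /F lee_fin => h.
by rewrite /dist -/F heq.
Qed.

Definition distinct (K : fieldType) n (x : 'I_n -> K) := forall i j : 'I_n, i != j -> x i != x j.

Lemma abs_gt0 (K : fieldType) (R : realType) (abs : K -> R) x : absval abs -> x != 0 -> 0 < abs x.
Proof.
case=> a0 aeq _ _ hx; rewrite lt_neqAle a0 andbT eq_sym.
by apply/eqP => /aeq /eqP; rewrite (negbTE hx).
Qed.

Lemma dist_gt0 (K : fieldType) (R : realType) (abs : K -> R) n (x : 'I_n -> K) i :
  absval abs -> (2 <= n)%N -> distinct x -> 0 < dist abs x i.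
Proof.
move=> ha n2 hx; have [[j0 hj0 ->] _] := distP abs x i n2.
by apply: abs_gt0 => //; rewrite subr_eq0; apply: hx; rewrite eq_sym.
Qed.

Lemma eps_ge0 (K : fieldType) (R : realType) (abs : K -> R) n (xi x : 'I_n -> K) i :
  absval abs -> (2 <= n)%N -> distinct x -> 0 <= abs (x i - xi i) / dist abs x i.
Proof.
move=> ha n2 hx; apply: divr_ge0; [by case: ha | exact: ltW (dist_gt0 _ ha n2 hx)].
Qed.

Lemma eps_le (K : fieldType) (R : realType) (abs : K -> R) n (p : \bar R) (xi x : 'I_n -> K) i :
  absval abs -> (2 <= n)%N -> (1 <= p)%E -> distinct x ->
  abs (x i - xi i) / dist abs x i <= Err abs p xi x.
Proof.
move=> ha n2 hp hx; rewrite /Err; apply: (lp_comp i hp) => j.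
exact: eps_ge0.
Qed.

Lemma u_le (K : fieldType) (R : realType) (abs : K -> R) n (xi x : 'I_n -> K) i j :
  absval abs -> (2 <= n)%N -> distinct x -> j != i ->
  abs (x j - xi j) <= abs (x j - xi j) / dist abs x j * abs (x i - x j).
Proof.
move=> ha n2 hx hji.
have d0 := dist_gt0 j ha n2 hx.
have [_ hd] := distP abs x j n2.
have := hd i; rewrite eq_sym => /(_ hji) h.
rewrite (abs_subC _ _ ha) in h.
have a0 : 0 <= abs (x j - xi j) by case: ha.
rewrite -mulrA ler_peMr //.
by rewrite mulrC ler_pdivlMr // mul1r.
Qed.

Lemma step (K : fieldType) (R : realType) (abs : K -> R) n (p : \bar R) (f : {poly K})
    (xi x y : 'I_n -> K) (g ph : R) (i : 'I_n) :
  absval abs -> (2 <= n)%N -> (1 <= p)%E -> distinct x -> root_vector f xi ->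
  lead_coef f != 0 -> 0 < g -> 0 <= ph ->
  (forall j, abs (y j - xi j) <= g * ph * abs (x j - xi j)) ->
  (forall i j, i != j -> g * abs (x i - x j) <= abs (x i - y j)) ->
  abs (x i - f.[x i] / (lead_coef f * \prod_(j < n | j != i) (x i - y j)) - xi i)
    <= ((1 + Err abs p xi x * ph / proot p n) ^+ n.-1 - 1) * abs (x i - xi i) /\
  abs (x i - (x i - f.[x i] / (lead_coef f * \prod_(j < n | j != i) (x i - y j))))
    <= (1 + Err abs p xi x * ph / proot p n) ^+ n.-1 * abs (x i - xi i).
Proof.
move=> ha n2 hp hx hf a0 g0 ph0 hy hxy.
have ha' := ha; case: ha' => aa0 aeq amul atri.
set u := x i - xi i.
set t := Err abs p xi x.
set w := (1 + t * ph / proot p n) ^+ n.-1.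
have hD j : j != i -> x i - y j != 0.
  move=> hj; apply/eqP => h0; have := hxy i j; rewrite eq_sym => /(_ hj).
  rewrite h0 (proj2 (aeq 0) erefl) => h.
  have : 0 < abs (x i - x j) by apply: abs_gt0 => //; rewrite subr_eq0; apply: hx; rewrite eq_sym.
  have : 0 < g * abs (x i - x j) by rewrite mulr_gt0 // abs_gt0 // subr_eq0 hx // eq_sym.
  lra.
set W := fun j => (y j - xi j) / (x i - y j).
set Q := \prod_(j < n | j != i) (1 + W j).
have HQ : f.[x i] / (lead_coef f * \prod_(j < n | j != i) (x i - y j)) = u * Q.
  have -> : Q = \prod_(j < n | j != i) ((x i - xi j) / (x i - y j)).
    apply: eq_bigr => j hj; rewrite /W; field; exact: hD.
  rewrite prodf_div hf (bigD1 i) //= -/u.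
  have hDp : \prod_(j < n | j != i) (x i - y j) != 0.
    by apply/prodf_neq0 => j hj; apply: hD.
  by field; rewrite a0 hDp.
rewrite HQ.
have E1 : x i - u * Q - xi i = - (u * (Q - 1)) by rewrite /u; ring.
have E2 : x i - (x i - u * Q) = u * Q by ring.
rewrite E1 E2 absN // !amul.
set B := \prod_(j < n | j != i) (1 + abs (W j)).
have hB1 : abs (Q - 1) <= B - 1 by apply: abs_prod1.
have hQ : abs Q <= B by have := atri (Q - 1) 1; rewrite subrK (abs1 ha); lra.
set eps := fun j => abs (x j - xi j) / dist abs x j.
have eps0 : forall j, 0 <= eps j by move=> j; apply: eps_ge0.
have hBw : B <= w.
  apply: (@le_trans _ _ (\prod_(j < n | j != i) (1 + ph * eps j))).
    apply: ler_prod => j hj; apply/andP; split; first by rewrite addr_ge0.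
    rewrite lerD2l /W abs_div //.
    have hxyj : 0 < abs (x i - y j) by apply: abs_gt0 => //; apply: hD.
    rewrite ler_pdivrMr //.
    apply: (le_trans (hy j)).
    have := hxy i j; rewrite eq_sym => /(_ hj) hg.
    have hu := u_le xi ha n2 hx hj.
    rewrite -/(eps j) in hu.
    apply: (@le_trans _ _ (g * ph * (eps j * abs (x i - x j)))).
      by rewrite ler_wpM2l // mulr_ge0 // ltW.
    have e1 : g * ph * (eps j * abs (x i - x j)) = g * abs (x i - x j) * (ph * eps j) by ring.
    rewrite e1; apply: (le_trans (ler_wpM2r _ hg)); first by rewrite mulr_ge0.
    by rewrite le_eqVlt; apply/orP; left; apply/eqP; rewrite /eps; ring.
  apply: (le_trans (@prod_bound R p n (fun j => ph * eps j) i n2 hp _)).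
    by move=> j; rewrite mulr_ge0.
  have pr0 := proot_gt0 p n2.
  rewrite /w lerXn2r ?nnegrE ?addr_ge0 ?divr_ge0 ?mulr_ge0 ?lp_ge0 ?(ltW pr0) //.
    rewrite lerD2l ler_pM2r ?invr_gt0 // mulrC.
    exact: (lp_scale hp ph0 eps0).
have u0 : 0 <= abs u by [].
split; first by rewrite mulrC ler_wpM2r //; apply: (le_trans hB1); rewrite lerD2r.
by rewrite mulrC ler_wpM2r // (le_trans hQ).
Qed.

Definition gam (R : realType) (p : \bar R) n M (t : R) : R :=
  match M with 0 => 1 | M'.+1 => 1 - 2 * t * omegaN p n M' t end.

Lemma core (K : fieldType) (R : realType) (abs : K -> R) n (p : \bar R) (f : {poly K})
    (xi x : 'I_n -> K) :
  absval abs -> (2 <= n)%N -> (1 <= p)%E -> distinct x -> root_vector f xi ->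
  lead_coef f != 0 -> Psi p n (Err abs p xi x) <= 2 ->
  forall M, let t := Err abs p xi x in
  0 < gam p n M t /\
  (forall j, abs (WT f M x j - xi j) <= gam p n M t * phi p n M t * abs (x j - xi j)) /\
  (forall i j, i != j -> gam p n M t * abs (x i - x j) <= abs (x i - WT f M x j)) /\
  (forall i, (0 < M)%N -> abs (x i - WT f M x i) <= omegaN p n M.-1 t * abs (x i - xi i)).
Proof.
move=> ha n2 hp hx hf a0 HP M t.
have ha' := ha; case: ha' => aa0 aeq amul atri.
have t0 : 0 <= t.
  by rewrite /t /Err; apply: lp_ge0.
have Pt := phi_props n2 t0 HP.
elim: M => [|M [g0 [IH1 [IH2 _]]]].
  split; first exact: ltr01.
  split; first by move=> j; rewrite /= !mul1r.
  by split => // i j _; rewrite /= mul1r.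
have ph0 : 0 <= phi p n M t by case/andP: (Pt M).1.
have HS := fun i => step i ha n2 hp hx hf a0 g0 ph0 IH1 IH2.
have EW : forall i, WT f M.+1 x i =
   x i - f.[x i] / (lead_coef f * \prod_(j < n | j != i) (x i - WT f M x j)) by [].
have gp : 0 < gam p n M.+1 t by exact: (Pt M).2.
have hb : forall i, abs (x i - WT f M.+1 x i) <= omegaN p n M t * abs (x i - xi i).
  by move=> i; rewrite EW; exact: (HS i).2.
split => //; split.
  move=> j; rewrite EW.
  have -> : gam p n M.+1 t * phi p n M.+1 t = omegaN p n M t - 1.
    have -> : phi p n M.+1 t = (omegaN p n M t - 1) / gam p n M.+1 t by [].
    by rewrite mulrC divfK // gt_eqF.
  exact: (HS j).1.
split => //.
move=> i j hij.
have hji : j != i by rewrite eq_sym.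
have hu := u_le xi ha n2 hx hji.
have he := eps_le (p := p) xi j ha n2 hp hx.
rewrite -/t in he.
have e0 := eps_ge0 xi j ha n2 hx.
have w1 := omegaN_bounds n2 t0 (Pt M).1.
have /andP[w1' _] := w1.
have htri := atri (x i - WT f M.+1 x j) (WT f M.+1 x j - x j).
have e3 : x i - WT f M.+1 x j + (WT f M.+1 x j - x j) = x i - x j by ring.
rewrite e3 in htri.
rewrite (abs_subC (WT f M.+1 x j) (x j) ha) in htri.
have hbj := hb j.
set A := abs (x i - x j) in hu htri *.
set e := abs (x j - xi j) / dist abs x j in hu he e0.
set U := abs (x j - xi j) in hu hbj.
set w := omegaN p n M t in hbj w1' *.
have A0 : 0 <= A by exact: aa0.
have w0 : 0 <= w by apply: le_trans w1'.
have : w * U <= w * (e * A) by rewrite ler_wpM2l.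
have : w * (e * A) <= w * (t * A) by apply: ler_wpM2l => //; apply: ler_wpM2r.
rewrite /gam -/w.
have : 0 <= t * w * A by rewrite !mulr_ge0 // (le_trans ler01).
nra.
Qed.

Lemma inD_all (K : fieldType) n (f : {poly K}) N (x : 'I_n -> K) :
  (forall M, (M < N)%N -> forall i j, i != j -> x i != WT f M x j) -> inD f N x.
Proof.
elim: N => [//|N IH] h /=; split.
  by apply: IH => M hM; apply: h; apply: ltn_trans hM _.
exact: h.
Qed.

Lemma iter_step (K : fieldType) (R : realType) (abs : K -> R) n (p : \bar R) (f : {poly K})
    (xi x : 'I_n -> K) N' (t0 c : R) :
  absval abs -> (2 <= n)%N -> (1 <= p)%E -> root_vector f xi -> lead_coef f != 0 ->
  distinct x -> 0 <= t0 -> Psi p n t0 <= 2 -> 0 <= c <= 1 ->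
  Err abs p xi x <= c * t0 ->
  [/\ inD f N'.+1 x, distinct (WT f N'.+1 x),
   (forall i, abs (WT f N'.+1 x i - xi i)
      <= (omegaN p n N' (Err abs p xi x) - 1) * abs (x i - xi i)),
   (forall i, abs (WT f N'.+1 x i - xi i)
      <= c ^+ N'.+1 * (omegaN p n N' t0 - 1) * abs (x i - xi i)) &
   Err abs p xi (WT f N'.+1 x) <= c ^+ N'.+2 * phi p n N'.+1 t0 * t0].
Proof.
move=> ha n2 hp hf a0 hx t00 HP0 hc hE.
have ha' := ha; case: ha' => aa0 aeq amul atri.
set t := Err abs p xi x.
have tge : 0 <= t by rewrite /t /Err; apply: lp_ge0.
have tt0 : t <= t0.
  apply: (le_trans hE); case/andP: hc => c0 c1.
  by rewrite -[X in _ <= X]mul1r ler_wpM2r.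
have HP : Psi p n t <= 2 by apply: le_trans HP0; apply: Psi_mono => //; rewrite tge.
have C := core ha n2 hp hx hf a0 HP.
have [gN [bN [cN dN]]] := C N'.+1.
rewrite -/t in gN bN cN dN.
set y := WT f N'.+1 x in bN cN dN *.
have Pt := phi_props n2 tge HP.
have gphi : gam p n N'.+1 t * phi p n N'.+1 t = omegaN p n N' t - 1.
  have -> : phi p n N'.+1 t = (omegaN p n N' t - 1) / gam p n N'.+1 t by [].
  by rewrite mulrC divfK // gt_eqF.
have hbnd : forall i, abs (y i - xi i) <= (omegaN p n N' t - 1) * abs (x i - xi i).
  by move=> i; rewrite -gphi; apply: bN.
have G := gauge n2 t00 HP0 hc (s := t).
have [G1 G2] := G (introT andP (conj tge hE)) N'.
have phi0 := (phi_props n2 t00 HP0 N').1.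
have /andP[w1 _] := omegaN_bounds n2 t00 phi0.
have /andP[w1t _] := omegaN_bounds n2 tge (Pt N').1.
have hsep : forall i j, i != j -> gam p n N'.+1 t * abs (x i - x j) <= abs (y i - y j).
  move=> i j hij; have hji : j != i by rewrite eq_sym.
  have hui := u_le xi ha n2 hx hij.
  have huj := u_le xi ha n2 hx hji.
  rewrite (abs_subC (x j) (x i) ha) in hui.
  have ei := eps_le (p := p) xi i ha n2 hp hx.
  have ej := eps_le (p := p) xi j ha n2 hp hx.
  rewrite -/t in ei ej.
  have di := dN i isT; have dj := dN j isT.
  rewrite /= in di dj.
  have htri := atri (x i - x j) (0 : K).
  have E : x i - x j = (x i - y i) + (y i - y j) + (y j - x j) by ring.
  have h1 := atri ((x i - y i) + (y i - y j)) (y j - x j).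
  have h2 := atri (x i - y i) (y i - y j).
  rewrite -E in h1; rewrite (abs_subC (y j) (x j) ha) in h1.
  set A := abs (x i - x j) in hui huj h1 *.
  set w := omegaN p n N' t in di dj w1t *.
  have A0 : 0 <= A by exact: aa0.
  have w0 : 0 <= w by apply: le_trans w1t.
  have e0i := eps_ge0 xi i ha n2 hx.
  have e0j := eps_ge0 xi j ha n2 hx.
  set ei' := abs (x i - xi i) / dist abs x i in hui ei e0i.
  set ej' := abs (x j - xi j) / dist abs x j in huj ej e0j.
  have : w * abs (x i - xi i) <= w * (t * A).
    by apply: ler_wpM2l => //; apply: (le_trans hui); apply: ler_wpM2r.
  have : w * abs (x j - xi j) <= w * (t * A).
    by apply: ler_wpM2l => //; apply: (le_trans huj); apply: ler_wpM2r.
  rewrite /gam -/w.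
  have : 0 <= t * w * A by rewrite !mulr_ge0.
  nra.
have hdy : distinct y.
  move=> i j hij; rewrite -subr_eq0; apply/eqP => h.
  have := hsep i j hij; rewrite h (proj2 (aeq 0) erefl).
  have : 0 < gam p n N'.+1 t * abs (x i - x j).
    by rewrite mulr_gt0 // abs_gt0 // subr_eq0 hx.
  lra.
have hdist : forall i, gam p n N'.+1 t * dist abs x i <= dist abs y i.
  move=> i; have [[j0 hj0 ->] _] := distP abs y i n2.
  have [_ hd] := distP abs x i n2.
  apply: (le_trans _ (hsep i j0 _)); last by rewrite eq_sym.
  by apply: ler_wpM2l; [exact: ltW | apply: hd].
split => //.
- apply: inD_all => M hM i j hij.
  have [gM [_ [cM _]]] := C M.
  rewrite -subr_eq0; apply/eqP => h.
  have := cM i j hij; rewrite h (proj2 (aeq 0) erefl).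
  have : 0 < gam p n M t * abs (x i - x j).
    by rewrite mulr_gt0 // abs_gt0 // subr_eq0 hx.
  lra.
- move=> i; apply: (le_trans (hbnd i)); apply: ler_wpM2r => //.
-
  rewrite /Err.
  have hph0 : 0 <= phi p n N'.+1 t by case/andP: (Pt N'.+1).1.
  apply: (@le_trans _ _ (lpnorm p (fun i => phi p n N'.+1 t * (abs (x i - xi i) / dist abs x i)))).
    apply: lp_mono => // i; apply/andP; split; first by apply: eps_ge0.
    have dy0 := dist_gt0 i ha n2 hdy.
    have dx0 := dist_gt0 i ha n2 hx.
    rewrite ler_pdivrMr //.
    set U := abs (x i - xi i).
    have U0 : 0 <= U by exact: aa0.
    have k : phi p n N'.+1 t * (U / dist abs x i) * (gam p n N'.+1 t * dist abs x i)
           = gam p n N'.+1 t * phi p n N'.+1 t * U.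
      by field; rewrite gt_eqF.
    apply: (le_trans (bN i)); rewrite -k; apply: ler_wpM2l; last exact: hdist.
    by rewrite mulr_ge0 // divr_ge0 // ltW.
  apply: (le_trans (lp_scale hp hph0 (fun i => eps_ge0 xi i ha n2 hx))).
  rewrite -/(Err abs p xi x) -/t.
  have e : c ^+ N'.+2 * phi p n N'.+1 t0 * t0 = (c ^+ N'.+1 * phi p n N'.+1 t0) * (c * t0).
    by rewrite exprS; ring.
  rewrite e; apply: ler_pM => //; exact: (G (introT andP (conj tge hE)) N'.+1).1.
Qed.
Lemma poly_allroots0 (K : closedFieldType) (h : {poly K}) : (forall z, h.[z] = 0) -> h = 0.
Proof.
move=> hz; apply/eqP; apply/negPn/negP => h0.
have hs : size (h * 'X) = (size h).+1 by rewrite size_mulX.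
have sq : size (1 + h * 'X) = (size h).+1.
  rewrite addrC size_addl hs // size_poly1 ltnS lt0n size_poly_eq0 //.
have : size (1 + h * 'X) != 1%N by rewrite sq eqSS size_poly_eq0.
move/closed_rootP => [z]; rewrite /root !hornerE hz mul0r addr0 => /eqP.
by move/eqP; rewrite oner_eq0.
Qed.

Lemma simple_roots (K : closedFieldType) n (f : {poly K}) (xi : 'I_n -> K) :
  lead_coef f != 0 -> (forall z, f.[z] = lead_coef f * \prod_(i < n) (z - xi i)) ->
  (forall i j, i != j -> xi i != xi j) ->
  forall z, root f z -> mup z f = 1%N.
Proof.
move=> a0 hf hxi z hz.
have Hf : f = (lead_coef f)%:P * \prod_(i < n) ('X - (xi i)%:P).
  apply/eqP; rewrite -subr_eq0; apply/eqP; apply: poly_allroots0 => y.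
  rewrite hornerD hornerN hornerCM horner_prod hf. apply/eqP; rewrite subr_eq0; apply/eqP; congr (_ * _); apply: eq_bigr => i _; by rewrite hornerXsubC.
have [i0 _ hi0] : exists2 i0, true & z - xi i0 == 0.
  move: hz; rewrite /root hf mulf_eq0 (negbTE a0) /= => /prodf_eq0 [i _ h].
  by exists i.
move/eqP: hi0 => hi0; have zi : z = xi i0 by apply/eqP; rewrite -subr_eq0 hi0.
rewrite Hf mupMr; last by rewrite rootC.
rewrite -(big_map xi predT (fun y => 'X - y%:P)) mu_prod_XsubC.
rewrite count_map zi.
rewrite (eq_count (a2 := pred1 i0)); last first.
  move=> i /=; case: (eqVneq i i0) => [->|ne]; first by rewrite eqxx.
  by apply/negbTE; apply: hxi.
by rewrite count_uniq_mem ?index_enum_uniq // mem_index_enum.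
Qed.
Lemma geo_small (R : realType) (th e : R) : 0 <= th -> th < 1 -> 0 < e ->
  exists k0, forall k, (k0 <= k)%N -> th ^+ k < e.
Proof.
move=> t0 t1 e0.
have : `|th| < 1 by rewrite ger0_norm.
move/cvg_expr => H.
have := (proj1 (@cvgr0Pnorm_lt R R^o nat _ _ (fun k => th ^+ k)) H) e e0.
case=> k0 _ hk.
exists k0 => k hk0; have := hk k hk0; rewrite ger0_norm //= exprn_ge0 //.
Qed.
Lemma sep_xi (K : fieldType) (R : realType) (abs : K -> R) n (p : \bar R) (xi x : 'I_n -> K) j l :
  absval abs -> (2 <= n)%N -> (1 <= p)%E -> distinct x -> j != l ->
  (1 - 2 * Err abs p xi x) * abs (x j - x l) <= abs (xi j - xi l) /\
  abs (xi j - xi l) <= (1 + 2 * Err abs p xi x) * abs (x j - x l).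
Proof.
move=> ha n2 hp hx hjl.
have ha' := ha; case: ha' => aa0 aeq amul atri.
have hlj : l != j by rewrite eq_sym.
have hj := u_le xi ha n2 hx hjl.
have hl := u_le xi ha n2 hx hlj.
rewrite (abs_subC (x l) (x j) ha) in hj.
have ej := eps_le (p := p) xi j ha n2 hp hx.
have el := eps_le (p := p) xi l ha n2 hp hx.
have e0j := eps_ge0 xi j ha n2 hx.
have e0l := eps_ge0 xi l ha n2 hx.
have E1 : xi j - xi l = - (x j - xi j) + (x j - x l) + (x l - xi l) by ring.
have E2 : x j - x l = (x j - xi j) + (xi j - xi l) - (x l - xi l) by ring.
have U1 := atri (- (x j - xi j) + (x j - x l)) (x l - xi l).
have U2 := atri (- (x j - xi j)) (x j - x l).
have L1 := atri ((x j - xi j) + (xi j - xi l)) (- (x l - xi l)).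
have L2 := atri (x j - xi j) (xi j - xi l).
rewrite absN // in U2; rewrite absN // in L1.
rewrite -E1 in U1; rewrite -E2 in L1.
have A0 : 0 <= abs (x j - x l) by exact: aa0.
have h1 := ler_wpM2r A0 ej.
have h2 := ler_wpM2r A0 el.
split; lra.
Qed.

Fixpoint Sq (M k : nat) : nat := if k is k'.+1 then M.+1 * Sq M k' + 1 else 0.

Lemma Sq_spec M k : (M * Sq M k + 1 = M.+1 ^ k)%N.
Proof.
elim: k => [|k IH] /=; first by rewrite muln0.
rewrite expnS -IH; nia.
Qed.

Lemma Sq_div M k : (0 < M)%N -> Sq M k = ((M.+1 ^ k).-1 %/ M)%N.
Proof.
move=> M0; rewrite -Sq_spec addn1 /= mulKn //.
Qed.

Lemma Sq_S M k : Sq M k.+1 = (Sq M k + M.+1 ^ k)%N.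
Proof. by rewrite /= -Sq_spec; nia. Qed.

Lemma pow1 (R : realType) (lam th : R) M k :
  (lam ^+ Sq M.+1 k) ^+ M.+1 * (th * lam) = th * lam ^+ (M.+2 ^ k).
Proof.
rewrite -exprM mulrCA -exprSr -(Sq_spec M.+1 k) addn1 mulnC //.
Qed.

Lemma pow2 (R : realType) (lam : R) M k :
  (lam ^+ Sq M.+1 k) ^+ M.+2 * lam = lam ^+ Sq M.+1 k.+1.
Proof. by rewrite -exprM -exprSr /= addn1 mulnC. Qed.

Lemma maxnorm_le (K : fieldType) (R : realType) (abs : K -> R) n (v : 'I_n -> K) (B : R) :
  0 <= B -> (forall i, abs (v i) <= B) -> maxnorm abs v <= B.
Proof. by move=> B0 h; apply: bigmax_le. Qed.

Lemma maxnorm_ge (K : fieldType) (R : realType) (abs : K -> R) n (v : 'I_n -> K) i :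
  abs (v i) <= maxnorm abs v.
Proof. exact: (le_bigmax _ (fun j => abs (v j)) i). Qed.

Unset Implicit Arguments.

Theorem theorem2p11 (R : realType) (K : closedFieldType) (abs : K -> R)
    (n : nat) (f : {poly K}) (xi : 'I_n -> K) (N : nat) (p : \bar R)
    (x0 : 'I_n -> K) :
  absval abs -> (2 <= n)%N -> size f = n.+1 -> root_vector f xi ->
  (1 <= N)%N -> (1 <= p)%E ->
  (forall i j : 'I_n, i != j -> x0 i != x0 j) ->
  Psi p n (Err abs p xi x0) <= 2 ->
  let x := fun k => iter k (WT f N) x0 in
  let lam := phi p n N (Err abs p xi x0) in
  let th := psi p n N (Err abs p xi x0) in
  (forall z, root f z -> mup z f = 1%N) /\
      (forall k, inD f N (x k)) /\
      (forall i, converges abs (fun k => x k i) (xi i)) /\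
      (forall k i, abs (x k.+1 i - xi i)
                     <= th * lam ^+ (N.+1 ^ k) * abs (x k i - xi i)) /\
      (forall k i, abs (x k i - xi i)
                     <= th ^+ k * lam ^+ ((N.+1 ^ k).-1 %/ N) * abs (x0 i - xi i)) /\
      (Psi p n (Err abs p xi x0) < 2 -> conv_order abs x xi N.+1).
Proof.
move=> ha n2 hsize hf N1 hp hx0 HP.
case: N N1 => [//|N'] _ x lam th.
have ha' := ha; case: ha' => aa0 aeq amul atri.
have a0 : lead_coef f != 0 by rewrite lead_coef_eq0 -size_poly_eq0 hsize.
have hx0' : distinct x0 := hx0.
pose t0 := Err abs p xi x0.
have lamE : lam = phi p n N'.+1 t0 := erefl.
have thE : th = 1 - 2 * t0 * omegaN p n N' t0 := erefl.
clearbody lam th.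
have {}HP : Psi p n t0 <= 2 := HP.
have t00 : 0 <= t0 by apply: lp_ge0.
have Pt0 := phi_props n2 t00 HP.
have lam01 : 0 <= lam <= 1 by rewrite lamE; exact: (Pt0 N'.+1).1.
have /andP[lam0 lam1] := lam01.
have th0 : 0 < th by rewrite thE; exact: (Pt0 N').2.
have thlam : th * lam = omegaN p n N' t0 - 1.
  have -> : lam = (omegaN p n N' t0 - 1) / th by rewrite lamE thE.
  by rewrite mulrC divfK // gt_eqF.
have /andP[w01 _] := omegaN_bounds n2 t00 (Pt0 N').1.
have th1 : th <= 1 - 2 * t0.
  rewrite thE.
  by rewrite lerD2l lerN2 ler_peMr // mulr_ge0.
have cS k : 0 <= lam ^+ Sq N'.+1 k <= 1 by rewrite exprn_ge0 // exprn_ile1.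
have xS k : x k.+1 = WT f N'.+1 (x k) by [].
have Inv : forall k, [/\ distinct (x k), Err abs p xi (x k) <= lam ^+ Sq N'.+1 k * t0 &
    forall i, abs (x k i - xi i) <= th ^+ k * lam ^+ Sq N'.+1 k * abs (x0 i - xi i)].
  elim=> [|k [d e b]].
    by split => //= [|i]; rewrite !expr0 !mul1r.
  have [hD hdist hraw hb hE] := iter_step N' ha n2 hp hf a0 d t00 HP (cS k) e.
  rewrite xS; split => //.
    by rewrite -pow2; rewrite -lamE in hE.
  move=> i; apply: (le_trans (hb i)).
  rewrite -thlam pow1 Sq_S exprD exprS.
  have hu0 : 0 <= abs (x0 i - xi i) by exact: aa0.
  have := b i; set U := abs (x k i - xi i) => bi.
  have : th * lam ^+ (N'.+2 ^ k) * U <=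
      th * lam ^+ (N'.+2 ^ k) * (th ^+ k * lam ^+ Sq N'.+1 k * abs (x0 i - xi i)).
    by apply: ler_wpM2l => //; rewrite mulr_ge0 // ?exprn_ge0 // ltW.
  move/le_trans; apply; rewrite le_eqVlt; apply/orP; left; apply/eqP; ring.
have Est1 : forall k i, abs (x k.+1 i - xi i) <= th * lam ^+ (N'.+2 ^ k) * abs (x k i - xi i).
  move=> k i; have [d e b] := Inv k.
  have [_ _ _ hb _] := iter_step N' ha n2 hp hf a0 d t00 HP (cS k) e.
  by rewrite xS -pow1 thlam.
have Est2 : forall k i, abs (x k i - xi i)
    <= th ^+ k * lam ^+ ((N'.+2 ^ k).-1 %/ N'.+1) * abs (x0 i - xi i).
  by move=> k i; rewrite -Sq_div //; have [_ _ b] := Inv k.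
have Conv : forall i, converges abs (fun k => x k i) (xi i).
  move=> i e e0.
  have [u0|u0] := eqVneq (abs (x0 i - xi i)) 0.
    exists 0%N => k _; apply: (le_lt_trans (Est2 k i)); rewrite u0 mulr0 //.
  have up : 0 < abs (x0 i - xi i) by rewrite lt_neqAle eq_sym u0 aa0.
  have tp : 0 < t0.
    have := eps_le (p := p) xi i ha n2 hp hx0'; rewrite -/t0; apply: lt_le_trans.
    by rewrite divr_gt0 // dist_gt0.
  have thl1 : th < 1 by apply: (le_lt_trans th1); rewrite ltrBlDr ltrDl mulr_gt0.
  have [k0 hk0] := geo_small (ltW th0) thl1 (divr_gt0 e0 up).
  exists k0 => k hk; apply: (le_lt_trans (Est2 k i)).
  have := hk0 k hk; rewrite ltr_pdivlMr // => h.
  apply: le_lt_trans h; apply: ler_wpM2r => //; rewrite -[X in _ <= X]mulr1.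
  by apply: ler_wpM2l; rewrite ?exprn_ge0 ?exprn_ile1 // ltW.
have xid : forall i j, i != j -> xi i != xi j.
  move=> i j hij; have [h _] := sep_xi xi ha n2 hp hx0' hij.
  rewrite -/t0 in h; rewrite -subr_eq0; apply/eqP => hz.
  move: h; rewrite hz (proj2 (aeq 0) erefl).
  have : 0 < abs (x0 i - x0 j) by rewrite abs_gt0 // subr_eq0 hx0.
  have : 0 < 1 - 2 * t0 by apply: lt_le_trans th1.
  move=> h1 h2 h3; have : 0 < (1 - 2 * t0) * abs (x0 i - x0 j) by rewrite mulr_gt0.
  lra.
split; first exact: simple_roots a0 hf xid.
split; first by move=> k; have [d e _] := Inv k; have [] := iter_step N' ha n2 hp hf a0 d t00 HP (cS k) e.
split => //; split => //; split => //.
move=> _; split => //.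
have xmn0 : forall k, 0 <= maxnorm abs (fun i => x k i - xi i).
  move=> k; apply: le_trans _ (maxnorm_ge abs _ (Ordinal (ltn_trans (ltnSn 0) n2))); exact: aa0.
have [tp|tn] := ltrP 0 t0; last first.
  have t0z : t0 = 0 by apply/eqP; rewrite eq_le tn t00.
  exists 0; split => // k; rewrite mul0r; apply: maxnorm_le => // i.
  apply: le_trans (Est2 k.+1 i) _.
  have : abs (x0 i - xi i) / dist abs x0 i <= 0.
    by rewrite -t0z; apply: eps_le.
  have dpos := dist_gt0 i ha n2 hx0'.
  rewrite pmulr_lle0 ?invr_gt0 // => hu.
  have -> : abs (x0 i - xi i) = 0 by apply/eqP; rewrite eq_le hu aa0.
  by rewrite mulr0.
pose dl := fun j => dist abs xi j.
have dl0 : forall j, 0 < dl j by move=> j; apply: dist_gt0.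
pose L := lpnorm p (fun j => 2 / dl j).
have L0 : 0 <= L by apply: lp_ge0.
pose C := (omegaN p n N' t0 - 1) / t0 ^+ N'.+1 * L ^+ N'.+1.
have C0 : 0 <= C by rewrite !mulr_ge0 ?exprn_ge0 ?invr_ge0 ?exprn_ge0 ?subr_ge0 // ltW.
exists C; split => // k.
have [d e b] := Inv k.
have [_ _ hraw _ _] := iter_step N' ha n2 hp hf a0 d t00 HP (cS k) e.
set Mk := maxnorm abs (fun i => x k i - xi i).
have Mk0 : 0 <= Mk := xmn0 k.
set tk := Err abs p xi (x k).
have tk0 : 0 <= tk by apply: lp_ge0.
have tkt0 : tk <= t0.
  apply: (le_trans e); have /andP[_ c1] := cS k.
  by rewrite -[X in _ <= X]mul1r ler_wpM2r.
have t2 : 2 * tk <= 1.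
  have : 0 < 1 - 2 * t0 by apply: lt_le_trans th1.
  lra.
have tkL : tk <= L * Mk.
  rewrite /tk /Err mulrC.
  apply: le_trans (lp_scale hp Mk0 (fun j => divr_ge0 (ler0n _ 2) (ltW (dl0 j)))).
  apply: lp_mono => // j; apply/andP; split; first exact: eps_ge0.
  have [[l0 hl0 ->] _] := distP abs (x k) j n2.
  have [_ hdx] := distP abs xi j n2.
  have hjl0 : j != l0 by rewrite eq_sym.
  have hsep := (sep_xi xi ha n2 hp d hjl0).2.
  rewrite -/tk in hsep.
  have h1 : dl j <= 2 * abs (x k j - x k l0).
    apply: le_trans (hdx l0 hl0) _.
    apply: le_trans hsep _; apply: ler_wpM2r; [exact: aa0 | lra].
  have hpos : 0 < abs (x k j - x k l0) by rewrite abs_gt0 // subr_eq0 d // eq_sym.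
  rewrite ler_pdivrMr //.
  apply: le_trans (maxnorm_ge abs (fun i => x k i - xi i) j) _.
  rewrite -mulrA; apply: ler_peMr => //.
  by rewrite mulrAC ler_pdivlMr ?dl0 // mul1r.
have c01 : 0 <= tk / t0 <= 1.
  by apply/andP; split; [rewrite divr_ge0 // ltW | rewrite ler_pdivrMr // mul1r].
have hs : 0 <= tk <= tk / t0 * t0 by rewrite divfK ?gt_eqF // tk0 lexx.
have [_ G2] := gauge n2 t00 HP c01 hs N'.
have HPk : Psi p n tk <= 2 by apply: le_trans HP; apply: Psi_mono => //; rewrite tk0.
have /andP[wk1 _] := omegaN_bounds n2 tk0 ((phi_props n2 tk0 HPk N').1).
apply: maxnorm_le; first by rewrite mulr_ge0 // exprn_ge0.
move=> i; rewrite xS.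
have h1 : abs (WT f N'.+1 (x k) i - xi i) <= (tk / t0) ^+ N'.+1 * (omegaN p n N' t0 - 1) * Mk.
  apply: le_trans (hraw i) _; apply: ler_pM; rewrite ?subr_ge0 //.
  exact: (maxnorm_ge abs (fun i => x k i - xi i) i).
have h2 : (tk / t0) ^+ N'.+1 <= (L * Mk / t0) ^+ N'.+1.
  rewrite lerXn2r ?nnegrE ?divr_ge0 ?mulr_ge0 ?(ltW tp) //.
  by rewrite ler_pM2r ?invr_gt0.
apply: le_trans h1 _.
have -> : C * Mk ^+ N'.+2 = (L * Mk / t0) ^+ N'.+1 * (omegaN p n N' t0 - 1) * Mk.
  rewrite /C !exprMn exprVn [Mk ^+ N'.+2]exprSr; field.
  by rewrite expf_neq0 // gt_eqF.
by rewrite ler_wpM2r // ler_wpM2r // subr_ge0.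
Qed.
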